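(* In the setting of the linkage $\mathcal{L}$, for each case $k\in\{1,2,3\}$ of the classification below there is a planar map $\sigma_k$ of the $xz$-plane with $\sigma_k(A_0)=B_0$ and $\sigma_k(A_j)=B_j$: (1) If $L_j$ satisfies case 1 (i.e. $v_j=v_0=\pm\tfrac{u_0}{t_0}$ and $u_j=\tfrac{u_0t_j}{t_0}$, with $b$ on the compatible branch), then $\sigma_1$ is the central scaling with center $S_2$ mapping $S_1$ to $S_3$. (2) If $L_j$ satisfies case 2 (i.e. $v_0=\mp\tfrac{u_0}{t_0}$, $v_j=\mp\tfrac{u_0(s_0^2-t_0^2)}{t_0(s_j^2-t_j^2)}$, $u_j=\tfrac{\sqrt{t_0v_j(s_j^2t_0v_j\pm s_0^2u_0\mp t_0^2u_0)}}{t_0}$, with $b$ on the compatible branch), then $\sigma_2$ is the perspective collineation with center $S_2$ and axis the line orthogonal to $q$ through the midpoint $M$ of $S_1$ and $S_3$, mapping $S_1$ to $S_3$. (3) If $L_j$ satisfies case 3 (i.e. $v_j=v_0$, $u_j=\sqrt{s_j^2v_0^2-s_0^2v_0^2+u_0^2}$, $t_j=\sqrt{s_j^2-s_0^2+t_0^2}$), then with $\alpha$ and $\beta$ the lines orthogonal to $q$ through $A_0$ and $B_0$ respectively, $A_j\in\alpha$, $B_j\in\beta$, and $\sigma_3$ is the central perspectivity with center $S_2$ mapping points of $\alpha$ to points of $\beta$.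
   Context: Planar linkage $\mathcal{L}$ in the $xz$-plane: the $z$-axis is the line $q$; $S_2=(0,0,0)^T$, $S_1=(0,0,a)^T$ with $a>0$, $S_3=(0,0,b)^T$ with $b\neq0$, sliding along $q$. For each index $i\in\{0,\dots,p\}$ there are points $A_i=(d_i,0,z_i)^T$ and $B_i=v_iA_i$ ($v_i\neq 0$ fixed) with fixed lengths $s_i=\overline{S_2A_i}>0$, $t_i=\overline{S_1A_i}>0$, $u_i=\overline{S_3B_i}>0$, so that $d_i=\frac{\sqrt{2a^2s_i^2+2a^2t_i^2+2s_i^2t_i^2-a^4-s_i^4-t_i^4}}{2a}$, $z_i=\frac{a^2+s_i^2-t_i^2}{2a}$, and $b$ is determined from $\|B_0-S_3\|^2=u_0^2$ (two branches $b_\pm$; in cases 1 and 2 the branch is the one for which the linkage is mobile, depending on the sign of $z_0$ and of $v_0$). A central scaling is a homothety; a perspective collineation of the plane is a projective collineation fixing every point of a line (axis) and every line through a point (center). *)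

(* Defs.v *)
(* Points of the xz-plane are pairs (x, z) : R * R. *)
From HB Require Import structures.
From mathcomp Require Import all_boot all_order all_algebra.
Set Implicit Arguments. Unset Strict Implicit. Unset Printing Implicit Defensive.
Import Order.TTheory GRing.Theory Num.Theory.
Local Open Scope ring_scope.

Section Linkage.
Variable R : rcfType.

(* coordinates of A_i = (d_i, 0, z_i) from a = |S2S1|, s = |S2A|, t = |S1A| *)
Definition dcoord (a s t : R) : R :=
  Num.sqrt (2 * a ^+ 2 * s ^+ 2 + 2 * a ^+ 2 * t ^+ 2 + 2 * s ^+ 2 * t ^+ 2
            - a ^+ 4 - s ^+ 4 - t ^+ 4) / (2 * a).
Definition dradicand (a s t : R) : R :=
  2 * a ^+ 2 * s ^+ 2 + 2 * a ^+ 2 * t ^+ 2 + 2 * s ^+ 2 * t ^+ 2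
            - a ^+ 4 - s ^+ 4 - t ^+ 4.
Definition zcoord (a s t : R) : R := (a ^+ 2 + s ^+ 2 - t ^+ 2) / (2 * a).

Definition Apt (a s t : R) : R * R := (dcoord a s t, zcoord a s t).
Definition Bpt (a s t v : R) : R * R := (v * dcoord a s t, v * zcoord a s t).

(* the two roots b_+ (sg = 1) and b_- (sg = -1) of ||B_0 - S_3||^2 = u_0^2 *)
Definition b_branch (a s0 t0 u0 v0 sg : R) : R :=
  v0 * zcoord a s0 t0
  + sg * Num.sqrt (u0 ^+ 2 - v0 ^+ 2 * dcoord a s0 t0 ^+ 2).

Definition homothety (c : R * R) (k : R) (p : R * R) : R * R :=
  (c.1 + k * (p.1 - c.1), c.2 + k * (p.2 - c.2)).

(* projective plane: homogeneous coordinates (x : z : w); lines are covectors *)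
Definition homog (p : R * R) : 'cV[R]_3 := \col_(i < 3) nth 0 [:: p.1; p.2; 1] i.
Definition on_line (l : 'rV[R]_3) (x : 'cV[R]_3) : Prop := (l *m x) 0 0 = 0.
(* the line z = h, i.e. the line orthogonal to q (the z-axis) at height h *)
Definition horiz_line (h : R) : 'rV[R]_3 := \row_(i < 3) nth 0 [:: 0; 1; - h] i.

Definition persp_collineation (M : 'M[R]_3) (C : 'cV[R]_3) (ax : 'rV[R]_3) : Prop :=
  [/\ M \in unitmx,
      (forall x : 'cV[R]_3, x != 0 -> on_line ax x -> exists k : R, M *m x = k *: x)
    & (forall (l : 'rV[R]_3) (x : 'cV[R]_3),
         on_line l C -> on_line l x -> on_line l (M *m x))].

Definition coll_maps (M : 'M[R]_3) (p q : R * R) : Prop :=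
  exists k : R, k != 0 /\ M *m homog p = k *: homog q.

Definition collinear3 (c p q : R * R) : Prop :=
  (p.1 - c.1) * (q.2 - c.2) - (p.2 - c.2) * (q.1 - c.1) = 0.

Definition persp_image (c : R * R) (h1 h2 : R) (p q : R * R) : Prop :=
  [/\ p.2 = h1, q.2 = h2 & collinear3 c p q].

End Linkage.

(* Main.v *)
Require Import Defs.
From mathcomp Require Import all_boot all_order all_algebra.
From mathcomp Require Import ring lra.
Import Order.TTheory GRing.Theory Num.Theory.
Local Open Scope ring_scope.
Set Implicit Arguments. Unset Strict Implicit.

Section S.
Variable R : rcfType.
Definition col3 (x0 x1 x2 : R) : 'cV[R]_3 := \col_(i < 3) nth 0 [:: x0; x1; x2] i.
Definition row3 (x0 x1 x2 : R) : 'rV[R]_3 := \row_(i < 3) nth 0 [:: x0; x1; x2] i.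
Definition mx3 (r0 r1 r2 : seq R) : 'M[R]_3 :=
  \matrix_(i < 3, j < 3) nth 0 (nth [::] [:: r0; r1; r2] i) j.

Lemma col3E (x : 'cV[R]_3) : exists x0 x1 x2, x = col3 x0 x1 x2.
Proof.
exists (x ord0 0), (x (lift ord0 ord0) 0), (x ord_max 0).
apply/matrixP => i j; rewrite !mxE (ord1 j).
by case: i => [[|[|[|//]]] Hi]; congr (x _ _); apply: val_inj.
Qed.

Lemma row3E (x : 'rV[R]_3) : exists x0 x1 x2, x = row3 x0 x1 x2.
Proof.
exists (x 0 ord0), (x 0 (lift ord0 ord0)), (x 0 ord_max).
apply/matrixP => i j; rewrite !mxE (ord1 i).
by case: j => [[|[|[|//]]] Hi]; congr (x _ _); apply: val_inj.
Qed.

Lemma mulmx_mx3 r0 r1 r2 x0 x1 x2 :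
  mx3 r0 r1 r2 *m col3 x0 x1 x2 =
  col3 (nth 0 r0 0 * x0 + nth 0 r0 1 * x1 + nth 0 r0 2 * x2)
       (nth 0 r1 0 * x0 + nth 0 r1 1 * x1 + nth 0 r1 2 * x2)
       (nth 0 r2 0 * x0 + nth 0 r2 1 * x1 + nth 0 r2 2 * x2).
Proof.
apply/matrixP => i j; rewrite !mxE !big_ord_recl big_ord0 !mxE /=.
by case: i => [[|[|[|//]]] Hi] /=; rewrite addr0 addrA.
Qed.

Lemma dot3 l0 l1 l2 x0 x1 x2 :
  (row3 l0 l1 l2 *m col3 x0 x1 x2) 0 0 = l0 * x0 + l1 * x1 + l2 * x2.
Proof. by rewrite !mxE !big_ord_recl big_ord0 !mxE /= addr0 addrA. Qed.

Lemma mulmx_mx3m r0 r1 r2 q0 q1 q2 :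
  mx3 r0 r1 r2 *m mx3 q0 q1 q2 =
  \matrix_(i < 3, j < 3) (nth 0 (nth [::] [:: r0; r1; r2] i) 0 * nth 0 q0 j
     + nth 0 (nth [::] [:: r0; r1; r2] i) 1 * nth 0 q1 j
     + nth 0 (nth [::] [:: r0; r1; r2] i) 2 * nth 0 q2 j).
Proof.
apply/matrixP => i j; rewrite !mxE !big_ord_recl big_ord0 !mxE /=.
by rewrite addr0 addrA.
Qed.

Lemma col3_eq x0 x1 x2 y0 y1 y2 : x0 = y0 -> x1 = y1 -> x2 = y2 ->
  col3 x0 x1 x2 = col3 y0 y1 y2.
Proof. by move=> -> -> ->. Qed.

Lemma scale_col3 k x0 x1 x2 : k *: col3 x0 x1 x2 = col3 (k * x0) (k * x1) (k * x2).
Proof.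
apply/matrixP => i j; rewrite !mxE.
by case: i => [[|[|[|//]]] Hi].
Qed.

Lemma homogE (p : R * R) : homog p = col3 p.1 p.2 1.
Proof. by []. Qed.

Lemma horizE h : horiz_line h = row3 0 1 (- h).
Proof. by []. Qed.

Lemma mx3_unit (b a : R) : a != 0 -> b != 0 ->
  mx3 [:: 1; 0; 0] [:: 0; 1; 0] [:: 0; 2 / b; - a / b] \in unitmx.
Proof.
move=> a0 b0.
have := @mulmx1_unit _ _ (mx3 [:: 1; 0; 0] [:: 0; 1; 0] [:: 0; 2 / b; - a / b])
   (mx3 [:: 1; 0; 0] [:: 0; 1; 0] [:: 0; 2 / a; - b / a]).
case=> // .
rewrite mulmx_mx3m; apply/matrixP => i j; rewrite !mxE.
case: i => [[|[|[|//]]] Hi]; case: j => [[|[|[|//]]] Hj] /=; try ring; field; by apply/andP.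
Qed.


Lemma heron (a s t : R) : 0 < a -> 0 <= dradicand a s t ->
  dcoord a s t ^+ 2 + (zcoord a s t - a) ^+ 2 = t ^+ 2.
Proof.
move=> ha hD; have a0 : a != 0 by rewrite gt_eqF.
rewrite /dcoord expr_div_n sqr_sqrtr; last by exact: hD.
rewrite /zcoord; field; by rewrite a0.
Qed.

Lemma hz2 (a s t : R) : 0 < a -> 2 * zcoord a s t - a = (s ^+ 2 - t ^+ 2) / a.
Proof.
move=> ha; have a0 : a != 0 by rewrite gt_eqF.
rewrite /zcoord; field; by rewrite a0.
Qed.
End S.

Theorem mainTheorem2 (R : rcfType) (p j : nat) (a b : R) (s t u v : nat -> R) :
  0 < a -> b != 0 -> (0 < j <= p)%N ->
  (forall i, (i <= p)%N ->
     [/\ 0 < s i, 0 < t i, 0 < u i, v i != 0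
       & 0 <= dradicand a (s i) (t i)]) ->
  (* ||B_0 - S_3||^2 = u_0^2 *)
  (v 0%N * dcoord a (s 0%N) (t 0%N)) ^+ 2
    + (v 0%N * zcoord a (s 0%N) (t 0%N) - b) ^+ 2 = u 0%N ^+ 2 ->
  let S1 : R * R := (0, a) in
  let S2 : R * R := (0, 0) in
  let S3 : R * R := (0, b) in
  let A0 := Apt a (s 0%N) (t 0%N) in
  let Aj := Apt a (s j) (t j) in
  let B0 := Bpt a (s 0%N) (t 0%N) (v 0%N) in
  let Bj := Bpt a (s j) (t j) (v j) in
  let z0 := zcoord a (s 0%N) (t 0%N) in
  (* case 1 *)
  ((exists eps : R, [/\ eps ^+ 2 = 1,
       v j = v 0%N, v 0%N = eps * u 0%N / t 0%N,
       u j = u 0%N * t j / t 0%N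
     & b = b_branch a (s 0%N) (t 0%N) (u 0%N) (v 0%N)
             (Num.sg (v 0%N * (a - z0)))]) ->
   exists k : R, [/\ homothety S2 k S1 = S3,
                     homothety S2 k A0 = B0 & homothety S2 k Aj = Bj])
  /\
  (* case 2 *)
  ((exists eps : R, [/\ eps ^+ 2 = 1,
       v 0%N = - eps * u 0%N / t 0%N,
       v j = - eps * u 0%N * (s 0%N ^+ 2 - t 0%N ^+ 2)
               / (t 0%N * (s j ^+ 2 - t j ^+ 2)),
       u j = Num.sqrt (t 0%N * v j * (s j ^+ 2 * t 0%N * v j
               + eps * s 0%N ^+ 2 * u 0%N - eps * t 0%N ^+ 2 * u 0%N)) / t 0%N
     & b = b_branch a (s 0%N) (t 0%N) (u 0%N) (v 0%N)
             (Num.sg (v 0%N * (z0 - a)))]) ->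
   exists M : 'M[R]_3,
     [/\ persp_collineation M (homog S2) (horiz_line ((a + b) / 2)),
         coll_maps M S1 S3, coll_maps M A0 B0 & coll_maps M Aj Bj])
  /\
  (* case 3 *)
  ([/\ v j = v 0%N,
       u j = Num.sqrt (s j ^+ 2 * v 0%N ^+ 2 - s 0%N ^+ 2 * v 0%N ^+ 2 + u 0%N ^+ 2)
     & t j = Num.sqrt (s j ^+ 2 - s 0%N ^+ 2 + t 0%N ^+ 2)] ->
   let alpha := A0.2 in
   let beta := B0.2 in
   [/\ Aj.2 = alpha, Bj.2 = beta,
       persp_image S2 alpha beta A0 B0 & persp_image S2 alpha beta Aj Bj]).
Proof.
move=> ha hb hjp hi _; cbv zeta.
have a0 : a != 0 by rewrite gt_eqF.
have [hs0 ht0 hu0 hv0 hD0] := hi 0%N isT.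
have [hsj htj huj hvj hDj] := hi j (proj2 (andP hjp)).
have t00 : t 0%N != 0 by rewrite gt_eqF.
set d0 := dcoord a (s 0%N) (t 0%N).
set z0 := zcoord a (s 0%N) (t 0%N).
set dj := dcoord a (s j) (t j).
set zj := zcoord a (s j) (t j).
have her0 : d0 ^+ 2 + (z0 - a) ^+ 2 = t 0%N ^+ 2 by exact: heron.
split; [|split].
- case=> eps [He Hvj Hv0 Huj Hb].
  have Hvt : v 0%N * t 0%N = eps * u 0%N by rewrite Hv0; field.
  have Hu2 : u 0%N ^+ 2 = v 0%N ^+ 2 * t 0%N ^+ 2.
    by rewrite -exprMn Hvt exprMn He mul1r.
  have Hb' : b = v 0%N * a.
    rewrite Hb /b_branch -/d0 -/z0.
    have -> : u 0%N ^+ 2 - v 0%N ^+ 2 * d0 ^+ 2 = (v 0%N * (a - z0)) ^+ 2.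
      by rewrite Hu2 -her0; ring.
    by rewrite sqrtr_sqr mulr_sg_norm; ring.
  exists (v 0%N); rewrite /homothety /Apt /Bpt /= -/d0 -/z0 -/dj -/zj Hvj.
  by split; congr (_, _); rewrite ?Hb'; ring.
- case=> eps [He Hv0 Hvj Huj Hb].
  have Hvt : v 0%N * t 0%N = - eps * u 0%N by rewrite Hv0; field.
  have Hu2 : u 0%N ^+ 2 = v 0%N ^+ 2 * t 0%N ^+ 2.
    by rewrite -exprMn Hvt exprMn sqrrN He mul1r.
  have Hb0 : b = v 0%N * (2 * z0 - a).
    rewrite Hb /b_branch -/d0 -/z0.
    have -> : u 0%N ^+ 2 - v 0%N ^+ 2 * d0 ^+ 2 = (v 0%N * (z0 - a)) ^+ 2.
      by rewrite Hu2 -her0; ring.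
    by rewrite sqrtr_sqr mulr_sg_norm; ring.
  have stj : s j ^+ 2 - t j ^+ 2 != 0.
    apply: contra hvj => /eqP e; by rewrite Hvj e mulr0 invr0 mulr0.
  have Hbj : b = v j * (2 * zj - a).
    rewrite Hb0 /z0 /zj !hz2 // Hvj Hv0; field; by rewrite stj t00 a0.
  have z00 : 2 * z0 - a != 0 by apply: contra hb => /eqP e; rewrite Hb0 e mulr0.
  have zj0 : 2 * zj - a != 0 by apply: contra hb => /eqP e; rewrite Hbj e mulr0.
  exists (mx3 [:: 1; 0; 0] [:: 0; 1; 0] [:: 0; 2 / b; - a / b]).
  split.
  + split.
    * exact: mx3_unit.
    * move=> x _; have [x0 [x1 [x2 ->]]] := col3E x.
      rewrite /on_line horizE dot3 => Hx.
      have Hx1 : x1 = (a + b) / 2 * x2.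
        by apply/eqP; rewrite -subr_eq0; rewrite -Hx; apply/eqP; ring.
      exists 1; rewrite mulmx_mx3 scale_col3 /=; apply: col3_eq; rewrite ?Hx1; field; rewrite ?hb //.
    * move=> l x; have [l0 [l1 [l2 ->]]] := row3E l; have [x0 [x1 [x2 ->]]] := col3E x.
      rewrite /on_line homogE /= !dot3 mulmx_mx3 dot3 /= => Hl2 Hx.
      have e2 : l2 = 0 by rewrite -Hl2; ring.
      rewrite e2 in Hx *; transitivity (l0 * x0 + l1 * x1 + 0 * x2); [ring | exact: Hx].
  + exists (a / b); split; first by rewrite mulf_neq0 ?invr_neq0.
    rewrite !homogE mulmx_mx3 scale_col3 /=; apply: col3_eq; field; by rewrite hb.
  + exists (v 0%N)^-1; split; first by rewrite invr_neq0.
    rewrite !homogE mulmx_mx3 scale_col3 /=; apply: col3_eq; rewrite -/d0 -/z0.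
    * field; by rewrite hv0.
    * field; by rewrite hv0.
    * rewrite Hb0; field; by rewrite hv0 z00.
  + exists (v j)^-1; split; first by rewrite invr_neq0.
    rewrite !homogE mulmx_mx3 scale_col3 /=; apply: col3_eq; rewrite -/dj -/zj.
    * field; by rewrite hvj.
    * field; by rewrite hvj.
    * rewrite Hbj; field; by rewrite hvj zj0.
- case=> Hvj Huj Htj.
  have Ht2 : t j ^+ 2 = s j ^+ 2 - s 0%N ^+ 2 + t 0%N ^+ 2.
    rewrite Htj sqr_sqrtr //; apply: ltW; rewrite -sqrtr_gt0 -Htj; exact: htj.
  have hzj : zj = z0.
    rewrite /zj /z0 /zcoord Ht2; congr (_ / _); ring.
  rewrite /Apt /Bpt /= -/d0 -/z0 -/dj -/zj hzj Hvj.
  split => //; split => //; rewrite /collinear3 /=; ring.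
Qed.
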